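(* Let $\mathcal H=\mathbb C^2$ with orthonormal basis $\{|0\rangle,|1\rangle\}$ and let $E_i=\tfrac12|\varphi_i\rangle\langle\varphi_i|$, $i=1,\dots,4$, where $|\varphi_1\rangle=|0\rangle$ and $|\varphi_{j}\rangle=\tfrac1{\sqrt3}|0\rangle+\sqrt{\tfrac23}e^{2\pi i (j-2)/3}|1\rangle$ for $j=2,3,4$ (the qubit SIC-POVM). Let $\mathcal T=\mathcal S(\mathbb C^2)$ be all qubit states and $\mathcal A$ the single POVM $\{E_i\}_{i=1}^4$. Then $(\mathcal T,\mathcal A,\mathcal A)$ is not broadcastable, but for every $n\in\mathbb N$ the map $\Xi_n(\rho)=\sum_{i=1}^4\mathrm{tr}[E_i\rho]\,(3|\varphi_i\rangle\langle\varphi_i|-I)^{\otimes n}$ is a trace-preserving linear map satisfying $\mathrm{tr}[(E_{i_1}\otimes\cdots\otimes E_{i_n})\Xi_n(\rho)]\ge0$ for all $i_1,\dots,i_n$ and all states $\rho$, and $\mathrm{tr}[E_{j}\,\mathrm{tr}_{k^c}\Xi_n(\rho)]=\mathrm{tr}[E_j\rho]$ for all $j$, all $k\in\{1,\dots,n\}$ and all states $\rho$; i.e. the scenario is $1\to n$-pseudo-broadcastable for all $n$.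
   Context: $(\mathcal T,\mathcal A,\mathcal A)$ is broadcastable if there is a completely positive trace-preserving map $\Lambda:\mathcal L(\mathcal H)\to\mathcal L(\mathcal H\otimes\mathcal H)$ such that $\mathrm{tr}[A_k\mathrm{tr}_2\Lambda(\rho)]=\mathrm{tr}[A_k\rho]=\mathrm{tr}[A_k\mathrm{tr}_1\Lambda(\rho)]$ for all $\{A_k\}\in\mathcal A$, $\rho\in\mathcal T$, $k$. $\mathrm{tr}_{k^c}$ denotes the partial trace over all tensor factors except the $k$-th. *)

(* Defs.v *)
(* Complex scalars: an arbitrary numClosedFieldType C
   (e.g. complex numbers over a real closed field, or algC). *)
From HB Require Import structures.
From mathcomp Require Import all_boot all_order all_algebra.
Set Implicit Arguments. Unset Strict Implicit. Unset Printing Implicit Defensive.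
Import Order.TTheory GRing.Theory Num.Theory.
Local Open Scope ring_scope.

(* An operator on the Hilbert space C^I (I a finite index set = orthonormal
   basis) is given by its matrix entries A x y = <x|A|y>. *)
Definition op (C : Type) (I : Type) := I -> I -> C.

Definition trace (C : numClosedFieldType) (I : finType) (A : op C I) : C :=
  \sum_(x : I) A x x.

Definition mulop (C : numClosedFieldType) (I : finType) (A B : op C I) : op C I :=
  fun x y => \sum_(z : I) A x z * B z y.

Definition idop (C : numClosedFieldType) (I : finType) : op C I :=
  fun x y => (x == y)%:R.

Definition psd (C : numClosedFieldType) (I : finType) (A : op C I) : Prop :=
  forall v : I -> C, 0 <= \sum_(x : I) \sum_(y : I) (v x)^* * A x y * v y.

Definition is_state (C : numClosedFieldType) (I : finType) (rho : op C I) : Prop :=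
  psd rho /\ trace rho = 1.

(* basis of (C^d)^{\otimes n}: functions 'I_n -> 'I_d *)
Definition qudits (d n : nat) : finType := {ffun 'I_n -> 'I_d}.

Definition tens (C : numClosedFieldType) (d n : nat) (B : 'I_n -> op C 'I_d)
  : op C (qudits d n) :=
  fun x y => \prod_(k < n) B k (x k) (y k).

(* tr_{k^c}: partial trace over all tensor factors except the k-th *)
Definition ptr (C : numClosedFieldType) (d n : nat) (k : 'I_n)
  (X : op C (qudits d n)) : op C 'I_d :=
  fun a b => \sum_(x : qudits d n | x k == a)
               \sum_(y : qudits d n | (y k == b) && [forall j, (j != k) ==> (x j == y j)])
                  X x y.

Definition linear_map (C : numClosedFieldType) (I J : finType)
  (L : op C I -> op C J) : Prop :=
  forall (c : C) (A B : op C I) (x y : J),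
    L (fun i j => c * A i j + B i j) x y = c * L A x y + L B x y.

Definition trace_preserving (C : numClosedFieldType) (I J : finType)
  (L : op C I -> op C J) : Prop :=
  forall A : op C I, trace (L A) = trace A.

(* id_m \otimes L is positive for every m *)
Definition completely_positive (C : numClosedFieldType) (I J : finType)
  (L : op C I -> op C J) : Prop :=
  forall (m : nat) (X : op C ('I_m * I)%type), psd X ->
    psd (fun p q : ('I_m * J)%type => L (fun i j => X (p.1, i) (q.1, j)) p.2 q.2).

Definition cptp (C : numClosedFieldType) (I J : finType)
  (L : op C I -> op C J) : Prop :=
  linear_map L /\ completely_positive L /\ trace_preserving L.

(* (T, A, A) broadcastable; A is a collection of POVMs with outcome set K *)
Definition broadcastable (C : numClosedFieldType) (d : nat) (K : finType)
  (T : op C 'I_d -> Prop) (A : (K -> op C 'I_d) -> Prop) : Prop :=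
  exists Lam : op C 'I_d -> op C (qudits d 2),
    cptp Lam /\
    forall F : K -> op C 'I_d, A F -> forall rho, T rho -> forall k : K,
      trace (mulop (F k) (ptr (ord0 : 'I_2) (Lam rho))) = trace (mulop (F k) rho) /\
      trace (mulop (F k) rho) = trace (mulop (F k) (ptr (ord_max : 'I_2) (Lam rho))).

(* e^{2 pi i / 3} *)
Definition omega (C : numClosedFieldType) : C := (-1 + 'i * sqrtC 3) / 2.

Definition ket (C : numClosedFieldType) (a b : C) : 'I_2 -> C :=
  fun x => if x == ord0 then a else b.

(* phi_1 = |0>, phi_j = 1/sqrt3 |0> + sqrt(2/3) e^{2 pi i (j-2)/3} |1>, j=2,3,4;
   here indexed by i : 'I_4 with i = j - 1 *)
Definition phi (C : numClosedFieldType) (i : 'I_4) : 'I_2 -> C :=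
  if i == ord0 then ket 1 0
  else ket (1 / sqrtC 3) (sqrtC (2 / 3) * omega C ^+ (i : nat).-1).

Definition proj (C : numClosedFieldType) (v : 'I_2 -> C) : op C 'I_2 :=
  fun x y => v x * (v y)^*.

Definition sicE (C : numClosedFieldType) (i : 'I_4) : op C 'I_2 :=
  fun x y => 2^-1 * proj (phi C i) x y.

Definition Xi (C : numClosedFieldType) (n : nat) (rho : op C 'I_2)
  : op C (qudits 2 n) :=
  fun x y => \sum_(i < 4) trace (mulop (sicE C i) rho) *
     tens (fun _ : 'I_n => fun a b => 3 * proj (phi C i) a b - @idop C _ a b) x y.

(* Main.v *)
Require Import Defs.
From HB Require Import structures.
From mathcomp Require Import all_boot all_order all_algebra.
From mathcomp Require Import ring.
From Stdlib Require Import FunctionalExtensionality.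
Import Order.TTheory GRing.Theory Num.Theory.
Local Open Scope ring_scope.
Set Implicit Arguments. Unset Strict Implicit.

Section Num.
Variable C : numClosedFieldType.

Lemma s3_real : sqrtC (3:C) \is Num.real.
Proof. by apply: ger0_real; rewrite sqrtC_ge0 ler0n. Qed.
Lemma s3_sq : sqrtC (3:C) ^+ 2 = 3.
Proof. by rewrite sqrtCK. Qed.
Lemma s3_conj : (sqrtC (3:C))^* = sqrtC 3.
Proof. exact: conj_Creal s3_real. Qed.
Lemma two_neq0 : (2:C) != 0.
Proof. by rewrite pnatr_eq0. Qed.
Lemma three_neq0 : (3:C) != 0.
Proof. by rewrite pnatr_eq0. Qed.

Lemma nat_conj (n : nat) : (n%:R : C)^* = n%:R.
Proof. by rewrite rmorph_nat. Qed.

Lemma omega_conj : (omega C)^* = (-1 - 'i * sqrtC 3) / 2.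
Proof.
rewrite /omega rmorphM rmorphD rmorphN rmorph1 rmorphM /= conjCi s3_conj.
rewrite (conj_Creal (x := 2^-1)) ?mulNr //.
by rewrite rpredV realn.
Qed.

Lemma omega_sq : (omega C) ^+ 2 = (omega C)^*.
Proof.
rewrite omega_conj /omega.
have -> : ((-1 + 'i * sqrtC 3) / 2) ^+ 2 = (1 - 2 * 'i * sqrtC 3 + 'i^+2 * sqrtC 3 ^+ 2) / 4 :> C.
  by field.
rewrite sqrCi s3_sq; by field.
Qed.

Lemma omega_norm : (omega C) * (omega C)^* = 1.
Proof.
rewrite omega_conj /omega.
have -> : ((-1 + 'i * sqrtC 3) / 2) * ((-1 - 'i * sqrtC 3) / 2) = (1 - 'i^+2 * sqrtC 3 ^+ 2) / 4 :> C.
  by field.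
rewrite sqrCi s3_sq; by field.
Qed.

Lemma omega3 : (omega C) ^+ 3 = 1.
Proof. by rewrite exprS omega_sq omega_norm. Qed.

Lemma omega_sum : 1 + omega C + (omega C)^+2 = 0.
Proof.
rewrite omega_sq omega_conj /omega; by field.
Qed.

End Num.


Notation o0 := (ord0 : 'I_2).
Notation o1 := (@ord_max 1 : 'I_2).

Lemma sum2 (R : nmodType) (F : 'I_2 -> R) : \sum_(i : 'I_2) F i = F o0 + F o1.
Proof. rewrite big_ord_recr big_ord1 /=; congr (F _ + _); exact: val_inj. Qed.

Lemma I2cases (i : 'I_2) : i = o0 \/ i = o1.
Proof. case: i => [[|[|?]]] Hi; [left|right|by []]; exact: val_inj. Qed.

Section Phi.
Variable C : numClosedFieldType.
Local Notation w := (omega C).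
Definition aa : C := 1 / sqrtC 3.
Definition bb : C := sqrtC (2/3).

Lemma aa_real : aa \is Num.real.
Proof. by rewrite /aa rpredM ?rpred1 // rpredV s3_real. Qed.
Lemma bb_real : bb \is Num.real.
Proof. by apply: ger0_real; rewrite sqrtC_ge0 divr_ge0 ?ler0n. Qed.
Lemma aa_conj : aa^* = aa. Proof. exact: conj_Creal aa_real. Qed.
Lemma bb_conj : bb^* = bb. Proof. exact: conj_Creal bb_real. Qed.
Lemma s3_neq0 : sqrtC (3:C) != 0.
Proof. by rewrite sqrtC_eq0 pnatr_eq0. Qed.
Lemma aa_sq : aa * aa = 1/3.
Proof.
rewrite /aa -expr2 expr_div_n s3_sq expr1n //.
Qed.
Lemma bb_sq : bb * bb = 2/3.
Proof. by rewrite /bb -expr2 sqrtCK. Qed.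
Lemma aa_neq0 : aa != 0.
Proof. by rewrite /aa mul1r invr_eq0 s3_neq0. Qed.
Lemma bb_neq0 : bb != 0.
Proof. by rewrite /bb sqrtC_eq0 mulf_neq0 ?invr_eq0 ?pnatr_eq0. Qed.

Lemma omega_sum' : w + w ^+ 2 = -1.
Proof. by apply/eqP; rewrite -subr_eq0 opprK addrC addrA omega_sum. Qed.

Lemma ketE0 (x y : C) : ket x y o0 = x. Proof. by []. Qed.
Lemma ketE1 (x y : C) : ket x y o1 = y. Proof. by []. Qed.
Definition g (u v : 'I_2 -> C) := u o0 * (v o0)^* + u o1 * (v o1)^*.

Lemma phi0E : phi C ord0 = ket 1 0. Proof. by []. Qed.

Lemma inner_gen (m n : nat) :
  g (ket aa (bb * w ^+ m)) (ket aa (bb * w ^+ n)) = 1/3 + 2/3 * (w ^+ m * (w^*) ^+ n).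
Proof.
rewrite /g !ketE0 !ketE1 aa_conj rmorphM /= rmorphXn /= bb_conj.
have -> : aa * aa + bb * w ^+ m * (bb * w^* ^+ n) = aa * aa + (bb * bb) * (w ^+ m * (w^*) ^+ n) by ring.
by rewrite aa_sq bb_sq.
Qed.

Lemma prod13 (z z' : C) : z * z' = 1 -> z + z' = -1 ->
  (1/3 + 2/3 * z) * (1/3 + 2/3 * z') = 1/3.
Proof.
move=> h1 h2.
have -> : (1/3 + 2/3 * z) * (1/3 + 2/3 * z') = 1/9 + 2/9 * (z + z') + 4/9 * (z * z') :> C by field.
rewrite h1 h2; by field.
Qed.

End Phi.

Section Phi2.
Variable C : numClosedFieldType.
Local Notation w := (omega C).

Lemma wmod n : w ^+ n = w ^+ (n %% 3).
Proof. by rewrite {1}(divn_eq n 3) exprD mulnC exprM omega3 expr1n mul1r. Qed.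

Lemma zz1 (m n : nat) : (w ^+ m * (w^*) ^+ n) * (w ^+ n * (w^*) ^+ m) = 1.
Proof.
have -> : (w ^+ m * (w^*) ^+ n) * (w ^+ n * (w^*) ^+ m) = (w * w^*) ^+ m * (w * w^*) ^+ n.
  by rewrite !exprMn; ring.
by rewrite omega_norm !expr1n mulr1.
Qed.

Lemma zsum (m n : nat) : (m < 3)%N -> (n < 3)%N -> m != n ->
  (w ^+ m * (w^*) ^+ n) + (w ^+ n * (w^*) ^+ m) = -1.
Proof.
case: m => [|[|[|m]]] //; case: n => [|[|[|n]]] // _ _ _;
  rewrite -omega_sq -!exprM -!exprD /= ?(wmod 4) ?(wmod 5) ?(wmod 6) /= ?expr1 ?expr0 ?expr2;
  rewrite -?omega_sum'; ring.
Qed.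

Lemma zdiag (m : nat) : w ^+ m * (w^*) ^+ m = 1.
Proof. by rewrite -exprMn omega_norm expr1n. Qed.

Lemma gphi_diag (i : 'I_4) : g (phi C i) (phi C i) = 1.
Proof.
case: i => [[|[|[|[|?]]]] Hi] //; rewrite /phi /=.
- by rewrite /g !ketE0 !ketE1 rmorph1 rmorph0; ring.
all: rewrite (inner_gen C) zdiag. all: by field.
Qed.

Lemma gphi_off (i j : 'I_4) : i != j ->
  g (phi C i) (phi C j) * g (phi C j) (phi C i) = 1/3.
Proof.
case: i => [[|[|[|[|?]]]] Hi] //; case: j => [[|[|[|[|?]]]] Hj] // _; rewrite /phi /=;
  try (rewrite !(inner_gen C); apply: prod13; [exact: zz1 | exact: zsum]);
  rewrite /g !ketE0 !ketE1 ?rmorph1 ?rmorph0 ?aa_conj -/(aa C); rewrite ?mulr0 ?mul0r ?addr0 ?mul1r ?mulr1;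
  by rewrite (aa_sq C) mul1r.
Qed.

Lemma trEM_gen (u v : 'I_2 -> C) :
  trace (mulop (fun x y => 2^-1 * proj u x y) (fun a b => 3 * proj v a b - @idop C _ a b))
  = 2^-1 * (3 * (g u v * g v u) - g u u).
Proof.
rewrite /trace /mulop /proj /idop /g !sum2 /=; ring.
Qed.

Lemma trEM (i j : 'I_4) :
  trace (mulop (sicE C j) (fun a b => 3 * proj (phi C i) a b - @idop C _ a b)) = (i == j)%:R.
Proof.
rewrite trEM_gen gphi_diag; case: eqP => [->|/eqP ne].
  by rewrite gphi_diag /=; field.
by rewrite gphi_off 1?eq_sym //=; field.
Qed.

End Phi2.

Lemma sum4 (R : nmodType) (F : 'I_4 -> R) :
  \sum_(i : 'I_4) F i = F (@Ordinal 4 0 isT) + F (@Ordinal 4 1 isT) + F (@Ordinal 4 2 isT) + F (@Ordinal 4 3 isT).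
Proof.
rewrite big_ord_recl !big_ord_recl big_ord0 addr0 !addrA.
by congr (_ + _ + _ + _); congr F; apply: val_inj.
Qed.

Section POVM.
Variable C : numClosedFieldType.
Local Notation w := (omega C).

Lemma cjM (x y : C) : (x * y)^* = x^* * y^*. Proof. exact: rmorphM. Qed.
Lemma cjX (x : C) n : (x ^+ n)^* = (x^*) ^+ n. Proof. exact: rmorphXn. Qed.

Lemma phi_0 (H : (0 < 4)%N) : phi C (Ordinal H) = ket 1 0. Proof. by []. Qed.
Lemma phi_S k (H : (k.+1 < 4)%N) : phi C (Ordinal H) = ket (aa C) (bb C * w ^+ k). Proof. by []. Qed.

Lemma sicE_sum (x y : 'I_2) : \sum_(i : 'I_4) sicE C i x y = @idop C _ x y.
Proof.
have e4 : w ^+ 4 = w by rewrite (wmod C 4) expr1.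
rewrite sum4 /sicE /proj /idop phi_0 !phi_S.
case: (I2cases x) => ->; case: (I2cases y) => ->; rewrite ?ketE0 ?ketE1 ?aa_conj ?rmorph0 ?rmorph1.
all: rewrite ?(cjM (bb C)) ?cjX ?bb_conj -?omega_sq.
all: rewrite ?expr1 ?expr0.
- have -> : 2^-1 * (1 * 1) + 2^-1 * (aa C * aa C) + 2^-1 * (aa C * aa C) +
     2^-1 * (aa C * aa C) = 2^-1 * (1 + 3 * (aa C * aa C)) by ring.
  by rewrite aa_sq; field.
- have -> : 2^-1 * (1 * 0) + 2^-1 * (aa C * (bb C * 1)) +
     2^-1 * (aa C * (bb C * w ^+ 2)) + 2^-1 * (aa C * (bb C * (w ^+ 2) ^+ 2)) =
     2^-1 * (aa C * bb C) * (1 + w ^+ 4 + w ^+ 2) by ring.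
  by rewrite e4 omega_sum mulr0.
- have -> : 2^-1 * (0 * 1) + 2^-1 * (bb C * 1 * aa C) +
     2^-1 * (bb C * w * aa C) + 2^-1 * (bb C * w ^+ 2 * aa C) =
     2^-1 * (aa C * bb C) * (1 + w + w ^+ 2) by ring.
  by rewrite omega_sum mulr0.
- have -> : 2^-1 * (0 * 0) + 2^-1 * (bb C * 1 * (bb C * 1)) +
     2^-1 * (bb C * w * (bb C * w ^+ 2)) + 2^-1 * (bb C * w ^+ 2 * (bb C * (w ^+ 2) ^+ 2)) =
     2^-1 * (bb C * bb C) * (1 + w ^+ 3 + (w ^+ 3) ^+ 2) by ring.
  by rewrite omega3 expr1n bb_sq; field.
Qed.
End POVM.


Section Gen.
Variable C : numClosedFieldType.

Lemma trlin (I : finType) (E A B : op C I) (c : C) :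
  trace (mulop E (fun i j => c * A i j + B i j)) = c * trace (mulop E A) + trace (mulop E B).
Proof.
rewrite /trace /mulop mulr_sumr -big_split; apply: eq_bigr => x _.
rewrite mulr_sumr -big_split; apply: eq_bigr => z _ /=; ring.
Qed.

Lemma trE_form (u : 'I_2 -> C) (A : op C 'I_2) :
  trace (mulop (fun x y => 2^-1 * proj u x y) A) =
  2^-1 * \sum_x \sum_y (u x)^* * A x y * u y.
Proof.
rewrite /trace /mulop exchange_big mulr_sumr; apply: eq_bigr => x _.
rewrite mulr_sumr; apply: eq_bigr => z _; rewrite /proj; ring.
Qed.

Lemma ptr_tens (d n : nat) (k : 'I_n) (B : 'I_n -> op C 'I_d) (a b : 'I_d) :
  ptr k (tens B) a b = B k a b * \prod_(j | j != k) \sum_(c : 'I_d) B j c c.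
Proof.
rewrite /ptr.
pose upd (x : qudits d n) : qudits d n := [ffun j => if j == k then b else x j].
have H1 : forall x : qudits d n,
  \sum_(y : qudits d n | (y k == b) && [forall j, (j != k) ==> (x j == y j)]) tens B x y
  = B k (x k) b * \prod_(j | j != k) B j (x j) (x j).
  move=> x; rewrite (big_pred1 (upd x)); last first.
    move=> y /=; apply/andP/eqP.
      case=> /eqP yk /forallP Hy; apply/ffunP => j; rewrite ffunE.
      case: eqP => [->|/eqP jk] //; by move: (Hy j); rewrite jk /= => /eqP.
    move=> ->; rewrite ffunE eqxx; split => //; apply/forallP => j; apply/implyP => jk.
    by rewrite ffunE (negbTE jk).
  rewrite /tens (bigD1 k) //= ffunE eqxx; congr (_ * _).
  by apply: eq_bigr => j jk; rewrite ffunE (negbTE jk).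
rewrite (eq_bigr (fun x : qudits d n => B k a b * \prod_(j | j != k) B j (x j) (x j))); last first.
  by move=> x /eqP xk; rewrite H1 xk.
rewrite -mulr_sumr; congr (_ * _).
pose D (j : 'I_n) (c : 'I_d) := if j == k then (c == a)%:R else B j c c.
have -> : \prod_(j | j != k) \sum_(c : 'I_d) B j c c = \prod_j \sum_(c : 'I_d) D j c.
  rewrite [RHS](bigD1 k) //= {1}/D eqxx.
  have S1 : \sum_(c : 'I_d) (c == a)%:R = 1 :> C.
    by rewrite (bigD1 a) //= eqxx big1 ?addr0 // => c /negbTE ->.
  rewrite S1 mul1r.
  by apply: eq_bigr => j /negbTE jk; apply: eq_bigr => c _; rewrite /D jk.
rewrite bigA_distr_bigA /= big_mkcond /=; apply: eq_bigr => x _.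
rewrite [RHS](bigD1 k) //= {1}/D eqxx; case: eqP => _; rewrite ?mul1r ?mul0r //.
by apply: eq_bigr => j /negbTE jk; rewrite /D jk.
Qed.

End Gen.

Section XiProps.
Variable C : numClosedFieldType.
Definition MM (i : 'I_4) : op C 'I_2 := fun a b => 3 * proj (phi C i) a b - @idop C _ a b.

Lemma trM (i : 'I_4) : \sum_(c : 'I_2) MM i c c = 1.
Proof.
have := gphi_diag C i; rewrite /g => h.
rewrite sum2 /MM /proj /idop /=.
have -> : 3 * (phi C i o0 * (phi C i o0)^*) - 1 + (3 * (phi C i o1 * (phi C i o1)^*) - 1)
  = 3 * (phi C i o0 * (phi C i o0)^* + phi C i o1 * (phi C i o1)^*) - 2 by ring.
by rewrite h; ring.
Qed.

Lemma sum_c (A : op C 'I_2) : \sum_(i : 'I_4) trace (mulop (sicE C i) A) = trace A.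
Proof.
rewrite /trace /mulop exchange_big; apply: eq_bigr => x _ /=.
rewrite exchange_big /=.
rewrite (eq_bigr (fun z => @idop C _ x z * A z x)); last first.
  by move=> z _; rewrite -mulr_suml sicE_sum.
rewrite (bigD1 x) //= /idop eqxx mul1r big1 ?addr0 // => z /negbTE.
by rewrite eq_sym => ->; rewrite mul0r.
Qed.

Lemma Xi_lin n : linear_map (@Xi C n).
Proof.
move=> c A B x y; rewrite /Xi mulr_sumr -big_split; apply: eq_bigr => i _ /=.
rewrite trlin; ring.
Qed.

Lemma Xi_tp n : trace_preserving (@Xi C n).
Proof.
move=> A; rewrite /trace /Xi exchange_big /= -[RHS]sum_c; apply: eq_bigr => i _.
rewrite -mulr_sumr.
have -> : \sum_(x : qudits 2 n) tens (fun _ : 'I_n => fun a b => 3 * proj (phi C i) a b - @idop C _ a b) x x = 1.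
  rewrite /tens.
  have -> : \sum_(x : qudits 2 n) \prod_(k < n) (3 * proj (phi C i) (x k) (x k) - @idop C _ (x k) (x k))
    = \prod_(k < n) \sum_(a : 'I_2) MM i a a by rewrite bigA_distr_bigA.
  by rewrite big1 // => k _; rewrite trM.
by rewrite mulr1.
Qed.

End XiProps.

Section XiProps2.
Variable C : numClosedFieldType.

Lemma sumprod (d n : nat) (B D : 'I_n -> op C 'I_d) :
  \sum_(x : qudits d n) \sum_(z : qudits d n) tens B x z * tens D z x
  = \prod_k \sum_(a : 'I_d) \sum_(b : 'I_d) B k a b * D k b a.
Proof.
rewrite bigA_distr_bigA; apply: eq_bigr => x _.
rewrite bigA_distr_bigA; apply: eq_bigr => z _.
by rewrite /tens -big_split.
Qed.

Lemma ptr_sum (n : nat) (k : 'I_n) (f : 'I_4 -> C) (T : 'I_4 -> op C (qudits 2 n)) (a b : 'I_2) :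
  ptr k (fun x y => \sum_(i : 'I_4) f i * T i x y) a b = \sum_(i : 'I_4) f i * ptr k (T i) a b.
Proof.
rewrite /ptr.
under eq_bigr => x _ do rewrite exchange_big.
rewrite exchange_big; apply: eq_bigr => i _.
rewrite mulr_sumr; apply: eq_bigr => x _; by rewrite mulr_sumr.
Qed.

Lemma tr_ext (I : finType) (E X Y : op C I) : (forall a b, X a b = Y a b) ->
  trace (mulop E X) = trace (mulop E Y).
Proof.
move=> h; rewrite /trace /mulop; apply: eq_bigr => x _; apply: eq_bigr => z _; by rewrite h.
Qed.

Lemma tr_sum (E : op C 'I_2) (f : 'I_4 -> C) (T : 'I_4 -> op C 'I_2) :
  trace (mulop E (fun a b => \sum_(i : 'I_4) f i * T i a b)) = \sum_(i : 'I_4) f i * trace (mulop E (T i)).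
Proof.
rewrite /trace /mulop.
under eq_bigr => x _ do under eq_bigr => z _ do rewrite mulr_sumr.
under eq_bigr => x _ do rewrite exchange_big.
rewrite exchange_big; apply: eq_bigr => i _.
rewrite mulr_sumr; apply: eq_bigr => x _; rewrite mulr_sumr; apply: eq_bigr => z _ /=; ring.
Qed.

Lemma c_ge0 (i : 'I_4) (rho : op C 'I_2) : is_state rho -> 0 <= trace (mulop (sicE C i) rho).
Proof.
case=> hp _; rewrite /sicE trE_form; apply: mulr_ge0; last exact: hp.
by rewrite invr_ge0 ler0n.
Qed.

Lemma Xi_pos n (idx : 'I_n -> 'I_4) (rho : op C 'I_2) : is_state rho ->
  0 <= trace (mulop (tens (fun k : 'I_n => sicE C (idx k))) (@Xi C n rho)).
Proof.
move=> hs.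
have -> : trace (mulop (tens (fun k : 'I_n => sicE C (idx k))) (@Xi C n rho))
  = \sum_(i : 'I_4) trace (mulop (sicE C i) rho) *
      \prod_k \sum_(a : 'I_2) \sum_(b : 'I_2) sicE C (idx k) a b * MM C i b a.
  rewrite /Xi; set cc := fun i => trace (mulop (sicE C i) rho).
  rewrite [LHS]/trace /mulop.
  under eq_bigr => x _ do under eq_bigr => z _ do rewrite mulr_sumr.
  under eq_bigr => x _ do rewrite exchange_big.
  rewrite exchange_big; apply: eq_bigr => i _.
  rewrite -sumprod mulr_sumr; apply: eq_bigr => x _; rewrite mulr_sumr; apply: eq_bigr => z _ /=.
  rewrite /MM /=; ring.
apply: sumr_ge0 => i _; apply: mulr_ge0; first exact: c_ge0.
apply: prodr_ge0 => k _.
have := trEM C i (idx k); rewrite /trace /mulop => ->.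
by rewrite ler0n.
Qed.

Lemma Xi_marg n (j : 'I_4) (k : 'I_n) (rho : op C 'I_2) :
  trace (mulop (sicE C j) (ptr k (@Xi C n rho))) = trace (mulop (sicE C j) rho).
Proof.
rewrite (@tr_ext _ _ _ (fun a b => \sum_(i : 'I_4) trace (mulop (sicE C i) rho) * MM C i a b)); last first.
  move=> a b; rewrite /Xi ptr_sum; apply: eq_bigr => i _.
  rewrite ptr_tens big1 ?mulr1 // => l _; exact: trM.
rewrite tr_sum (bigD1 j) //= big1 ?addr0.
  by rewrite /MM trEM eqxx mulr1.
by move=> i ij; rewrite /MM trEM (negbTE ij) mulr0.
Qed.

End XiProps2.


Section Kernel.
Variable C : numClosedFieldType.

Definition qform (I : finType) (A : op C I) (v u : I -> C) :=
  \sum_(x : I) \sum_(y : I) (v x)^* * A x y * u y.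

Lemma cjD (x y : C) : (x + y)^* = x^* + y^*. Proof. exact: rmorphD. Qed.
Lemma cjM' (x y : C) : (x * y)^* = x^* * y^*. Proof. exact: rmorphM. Qed.
Lemma cjN (x : C) : (- x)^* = - x^*. Proof. exact: rmorphN. Qed.

Lemma form_expand (I : finType) (A : op C I) (v u : I -> C) (t : C) :
  qform A (fun x => v x + t * u x) (fun x => v x + t * u x)
  = qform A v v + t * qform A v u + t^* * qform A u v + t * t^* * qform A u u.
Proof.
rewrite /qform !mulr_sumr -!big_split; apply: eq_bigr => x _ /=.
rewrite !mulr_sumr -!big_split; apply: eq_bigr => y _ /=.
rewrite cjD cjM'; ring.
Qed.

Lemma realarg (x c : C) : 0 <= c ->
  (forall s : C, s \is Num.real -> 0 <= s ^+ 2 * c - s * x) -> x = 0.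
Proof.
move=> c0 H.
have xr : x \is Num.real.
  have := H 1 (rpred1 _); rewrite expr1n mul1r mul1r => /ger0_real h.
  by have := rpredB (ger0_real c0) h; rewrite opprB addrC subrK.
have c1 : c + 1 != 0 by rewrite gt_eqF // ltr_wpDl.
pose s := x / (c + 1).
have sr : s \is Num.real by rewrite /s rpredM // rpredV rpredD ?rpred1 ?ger0_real.
have xs : x = s * (c + 1) by rewrite /s divfK.
have hx := H s sr; rewrite [X in s * X]xs in hx.
have e : s ^+ 2 * c - s * (s * (c + 1)) = - s ^+ 2 by ring.
rewrite e oppr_ge0 in hx; move: hx => hle.
have hge : 0 <= s ^+ 2 by rewrite -real_normK // exprn_ge0.
have : s ^+ 2 = 0 by apply/le_anti; rewrite hle hge.
move/eqP; rewrite expf_eq0 /= => /eqP s0.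
by rewrite xs s0 mul0r.
Qed.

Lemma kernel (I : finType) (A : op C I) (v : I -> C) :
  psd A -> qform A v v = 0 -> forall u, qform A v u = 0.
Proof.
move=> hA h0 u.
set p := qform A v u; set r := qform A u v; set c := qform A u u.
have c0 : 0 <= c by exact: hA.
have key : forall t, 0 <= t * p + t^* * r + t * t^* * c.
  move=> t; have := hA (fun x => v x + t * u x).
  by rewrite -/(qform A _ _) form_expand h0 add0r.
have e1 : p + r = 0.
  apply: (realarg c0) => s sr.
  have := key (- s); rewrite cjN (conj_Creal sr).
  by have -> : - s * p + - s * r + - s * - s * c = s ^+ 2 * c - s * (p + r) by ring.
have e2 : 'i * (p - r) = 0.
  apply: (realarg c0) => s sr.
  have := key (- 'i * s); rewrite cjM' cjN conjCi (conj_Creal sr).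
  have -> : - 'i * s * p + - - 'i * s * r + - 'i * s * (- - 'i * s) * c
     = s ^+ 2 * c * (- 'i ^+ 2) - s * ('i * (p - r)) by ring.
  by rewrite sqrCi opprK mulr1.
have : p - r = 0.
  by move/eqP: e2; rewrite mulf_eq0 (negbTE (neq0Ci C)) /= => /eqP.
move=> e3.
have : 2 * p = 0.
  have -> : 2 * p = (p + r) + (p - r) by ring.
  by rewrite e1 e3 addr0.
by move/eqP; rewrite mulf_eq0 pnatr_eq0 /= => /eqP.
Qed.

End Kernel.


Definition q (a b : 'I_2) : qudits 2 2 := [ffun j : 'I_2 => if j == o0 then a else b].
Lemma qE0 a b : q a b o0 = a. Proof. by rewrite ffunE eqxx. Qed.
Lemma qE1 a b : q a b o1 = b. Proof. by rewrite ffunE. Qed.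
Lemma qK (x : qudits 2 2) : q (x o0) (x o1) = x.
Proof. apply/ffunP => j; rewrite ffunE; by case: (I2cases j) => ->. Qed.

Lemma sumQ (R : nmodType) (F : qudits 2 2 -> R) :
  \sum_(x : qudits 2 2) F x = \sum_(a : 'I_2) \sum_(b : 'I_2) F (q a b).
Proof.
rewrite pair_big (reindex (fun p : 'I_2 * 'I_2 => q p.1 p.2)) //=.
exists (fun x : qudits 2 2 => (x o0, x o1)) => [[a b] _|x _] /=.
  by rewrite qE0 qE1.
by rewrite qK.
Qed.

Lemma sum_pair1 (R : nmodType) (T : finType) (G : 'I_1 * T -> R) :
  \sum_(p : 'I_1 * T) G p = \sum_(j : T) G (ord0, j).
Proof.
rewrite (reindex (fun j : T => (ord0, j))) //=.
exists (fun p : 'I_1 * T => p.2) => [j _|[i j] _] //=.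
by rewrite (ord1 i).
Qed.

Section Q.
Variable C : numClosedFieldType.

Lemma ptr0E (X : op C (qudits 2 2)) (a c : 'I_2) :
  ptr o0 X a c = \sum_(b : 'I_2) X (q a b) (q c b).
Proof.
rewrite /ptr.
rewrite (eq_bigr (fun x : qudits 2 2 => X x (q c (x o1)))); last first.
  move=> x _; rewrite (big_pred1 (q c (x o1))) // => y /=.
  apply/andP/eqP.
    case=> /eqP y0 /forallP /(_ o1) /= /eqP y1.
    by rewrite -(qK y) y0 y1.
  move=> ->; rewrite qE0 eqxx; split => //; apply/forallP => j; apply/implyP.
  by case: (I2cases j) => -> //; rewrite qE1.
rewrite big_mkcond sumQ (bigD1 a) //= [X in _ + X]big1 ?addr0.
  by apply: eq_bigr => b _; rewrite qE0 eqxx qE1.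
move=> a' ne; apply: big1 => b _; by rewrite qE0 (negbTE ne).
Qed.

Lemma ptr1E (X : op C (qudits 2 2)) (b d : 'I_2) :
  ptr o1 X b d = \sum_(a : 'I_2) X (q a b) (q a d).
Proof.
rewrite /ptr.
rewrite (eq_bigr (fun x : qudits 2 2 => X x (q (x o0) d))); last first.
  move=> x _; rewrite (big_pred1 (q (x o0) d)) // => y /=.
  apply/andP/eqP.
    case=> /eqP y1 /forallP /(_ o0) /= /eqP y0.
    by rewrite -(qK y) y0 y1.
  move=> ->; rewrite qE1 eqxx; split => //; apply/forallP => j; apply/implyP.
  by case: (I2cases j) => -> //; rewrite qE0.
rewrite big_mkcond sumQ exchange_big (bigD1 b) //= [X in _ + X]big1 ?addr0.
  by apply: eq_bigr => a _; rewrite qE1 eqxx qE0.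
move=> b' ne; apply: big1 => a _; by rewrite qE1 (negbTE ne).
Qed.

Definition BQ (X : op C (qudits 2 2)) (f g : 'I_2 -> 'I_2 -> C) :=
  \sum_(a : 'I_2) \sum_(b : 'I_2) \sum_(c : 'I_2) \sum_(d : 'I_2) (f a b)^* * X (q a b) (q c d) * g c d.

Definition VV (f : 'I_2 -> 'I_2 -> C) (x : qudits 2 2) := f (x o0) (x o1).

Lemma formV (X : op C (qudits 2 2)) (f g : 'I_2 -> 'I_2 -> C) : qform X (VV f) (VV g) = BQ X f g.
Proof.
rewrite /qform sumQ; apply: eq_bigr => a _; apply: eq_bigr => b _.
rewrite sumQ; apply: eq_bigr => c _; apply: eq_bigr => d _.
by rewrite /VV !qE0 !qE1.
Qed.

Lemma psdQ (X : op C (qudits 2 2)) (f : 'I_2 -> 'I_2 -> C) : psd X -> 0 <= BQ X f f.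
Proof. by move=> h; rewrite -formV; exact: h. Qed.

Lemma kerQ (X : op C (qudits 2 2)) (f : 'I_2 -> 'I_2 -> C) : psd X -> BQ X f f = 0 -> forall g, BQ X f g = 0.
Proof. by move=> h; rewrite -!formV => h0 g; rewrite -formV; exact: kernel. Qed.

Lemma BQ_ext (X : op C (qudits 2 2)) (f f' g : 'I_2 -> 'I_2 -> C) : (forall a b, f a b = f' a b) -> BQ X f g = BQ X f' g.
Proof.
move=> h; apply: eq_bigr => a _; apply: eq_bigr => b _; apply: eq_bigr => c _;
apply: eq_bigr => d _; by rewrite h.
Qed.

Lemma BQ_lin (X : op C (qudits 2 2)) (f f' g : 'I_2 -> 'I_2 -> C) (c1 c2 : C) :
  BQ X (fun a b => c1 * f a b + c2 * f' a b) g = c1^* * BQ X f g + c2^* * BQ X f' g.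
Proof. rewrite /BQ !sum2 !cjD !cjM'; ring. Qed.

Lemma trQ (X : op C (qudits 2 2)) : trace X = \sum_(a : 'I_2) \sum_(b : 'I_2) X (q a b) (q a b).
Proof. by rewrite /trace sumQ. Qed.

Definition dl (a b : 'I_2) : 'I_2 -> 'I_2 -> C := fun a' b' => (a' == a)%:R * (b' == b)%:R.

Lemma BQ_diag (X : op C (qudits 2 2)) (a b : 'I_2) : BQ X (dl a b) (dl a b) = X (q a b) (q a b).
Proof.
rewrite /BQ /dl (bigD1 a) //= [X in _ + X]big1 ?addr0; last first.
  move=> a' /negbTE ->; apply: big1 => b' _; apply: big1 => c _; apply: big1 => d _.
  by rewrite mul0r rmorph0 !mul0r.
rewrite (bigD1 b) //= [X in _ + X]big1 ?addr0; last first.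
  move=> b' /negbTE ->; apply: big1 => c _; apply: big1 => d _.
  by rewrite mulr0 rmorph0 !mul0r.
rewrite (bigD1 a) //= [X in _ + X]big1 ?addr0; last first.
  move=> c /negbTE ->; apply: big1 => d _; by rewrite !mul0r mulr0.
rewrite (bigD1 b) //= [X in _ + X]big1 ?addr0; last first.
  move=> d /negbTE ->; by rewrite !mulr0.
by rewrite !eqxx !mulr1 rmorph1 mul1r.
Qed.

End Q.


Section F.
Variable C : numClosedFieldType.
Local Notation aa := (aa C).
Local Notation bb := (bb C).
Definition e0 : 'I_2 -> C := ket 1 0.
Definition e1 : 'I_2 -> C := ket 0 1.
Definition uu : 'I_2 -> C := ket aa bb.
Definition ww : 'I_2 -> C := ket bb (- aa).

Lemma phi1 : phi C (@Ordinal 4 1 isT) = uu.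
Proof. by rewrite phi_S expr0 mulr1. Qed.
Lemma phi0 : phi C (@Ordinal 4 0 isT) = e0.
Proof. by []. Qed.

Lemma aabb : aa * aa + bb * bb = 1.
Proof. by rewrite aa_sq bb_sq; field. Qed.

Lemma is_state_proj (v : 'I_2 -> C) : g v v = 1 -> is_state (proj v).
Proof.
move=> h; split; last by rewrite /trace /proj sum2 -h.
move=> x; rewrite /proj !sum2.
set z := (x o0)^* * v o0 + (x o1)^* * v o1.
have -> : (x o0)^* * (v o0 * (v o0)^*) * x o0 + (x o0)^* * (v o0 * (v o1)^*) * x o1 +
  ((x o1)^* * (v o1 * (v o0)^*) * x o0 + (x o1)^* * (v o1 * (v o1)^*) * x o1) = z * z^*.
  by rewrite /z cjD !cjM' !conjCK; ring.
exact: mul_conjC_ge0.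
Qed.

Lemma g_e0 : g e0 e0 = 1.
Proof. by rewrite /g /e0 !ketE0 !ketE1 rmorph1 rmorph0; ring. Qed.
Lemma g_e1 : g e1 e1 = 1.
Proof. by rewrite /g /e1 !ketE0 !ketE1 rmorph1 rmorph0; ring. Qed.
Lemma g_uu : g uu uu = 1.
Proof. by rewrite /g /uu !ketE0 !ketE1 aa_conj bb_conj aabb. Qed.
Lemma g_ww : g ww ww = 1.
Proof. by rewrite /g /ww !ketE0 !ketE1 cjN aa_conj bb_conj -aabb; ring. Qed.

Lemma qform_proj (v : 'I_2 -> C) : g v v = 1 -> qform (proj v) v v = 1.
Proof.
move=> h; rewrite /qform /proj !sum2.
have -> : (v o0)^* * (v o0 * (v o0)^*) * v o0 + (v o0)^* * (v o0 * (v o1)^*) * v o1 +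
  ((v o1)^* * (v o1 * (v o0)^*) * v o0 + (v o1)^* * (v o1 * (v o1)^*) * v o1) =
  g v v * g v v by rewrite /g; ring.
by rewrite h mulr1.
Qed.

Lemma form_e0 (Y : op C 'I_2) : qform Y e0 e0 = Y o0 o0.
Proof. rewrite /qform /e0 !sum2 !ketE0 !ketE1 rmorph1 rmorph0; ring. Qed.

Lemma form_basis (Y : op C 'I_2) : qform Y uu uu + qform Y ww ww = trace Y.
Proof.
rewrite /qform /trace /uu /ww !sum2 !ketE0 !ketE1 cjN aa_conj bb_conj.
have -> : aa * Y o0 o0 * aa + aa * Y o0 o1 * bb + (bb * Y o1 o0 * aa + bb * Y o1 o1 * bb) +
  (bb * Y o0 o0 * bb + bb * Y o0 o1 * - aa + (- aa * Y o1 o0 * bb + - aa * Y o1 o1 * - aa))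
  = (aa * aa + bb * bb) * (Y o0 o0 + Y o1 o1) by ring.
by rewrite aabb mul1r.
Qed.

Lemma trace_ptr0 (X : op C (qudits 2 2)) : trace (ptr o0 X) = trace X.
Proof.
rewrite trQ /trace; apply: eq_bigr => a _; exact: ptr0E.
Qed.

Lemma trace_ptr1 (X : op C (qudits 2 2)) : trace (ptr o1 X) = trace X.
Proof.
rewrite trQ exchange_big /trace; apply: eq_bigr => a _; exact: ptr1E.
Qed.

Lemma ptr0_form (X : op C (qudits 2 2)) (v : 'I_2 -> C) :
  qform (ptr o0 X) v v = BQ X (fun a b => v a * e0 b) (fun a b => v a * e0 b)
                       + BQ X (fun a b => v a * e1 b) (fun a b => v a * e1 b).
Proof.
rewrite /qform !sum2 !ptr0E /BQ !sum2 /e0 /e1 !ketE0 !ketE1 !cjM' rmorph1 rmorph0; ring.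
Qed.

Lemma ptr1_form (X : op C (qudits 2 2)) (v : 'I_2 -> C) :
  qform (ptr o1 X) v v = BQ X (fun a b => e0 a * v b) (fun a b => e0 a * v b)
                       + BQ X (fun a b => e1 a * v b) (fun a b => e1 a * v b).
Proof.
rewrite /qform !sum2 !ptr1E /BQ !sum2 /e0 /e1 !ketE0 !ketE1 !cjM' rmorph1 rmorph0; ring.
Qed.

End F.


Section G.
Variable C : numClosedFieldType.
Local Notation aa := (aa C).
Local Notation bb := (bb C).

Lemma nobc : ~ broadcastable (@is_state C 'I_2) (fun F : 'I_4 -> op C 'I_2 => F = sicE C).
Proof.
case=> Lam [[Hlin [Hcp Htp]] H].
have Hpsd : forall rho, psd rho -> psd (Lam rho).
  move=> rho hr u.
  pose X := fun p q : ('I_1 * 'I_2)%type => rho p.2 q.2.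
  have hX : psd X.
    move=> v; rewrite sum_pair1; under eq_bigr => j _ do rewrite sum_pair1.
    exact: (hr (fun j => v (ord0, j))).
  have := Hcp 1%N X hX (fun p : ('I_1 * qudits 2 2)%type => u p.2).
  by rewrite sum_pair1; under eq_bigr => j _ do rewrite sum_pair1.
have h2 : (2^-1 : C) != 0 by rewrite invr_eq0 pnatr_eq0.
have M0 : forall rho k, is_state rho ->
    qform (ptr o0 (Lam rho)) (phi C k) (phi C k) = qform rho (phi C k) (phi C k).
  move=> rho k hs; have := (H (sicE C) erefl rho hs k).1.
  rewrite /sicE !trE_form => e; exact: (mulfI h2 e).
have M1 : forall rho k, is_state rho ->
    qform (ptr o1 (Lam rho)) (phi C k) (phi C k) = qform rho (phi C k) (phi C k).
  move=> rho k hs; have := (H (sicE C) erefl rho hs k).2.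
  rewrite /sicE !trE_form => e; symmetry; exact: (mulfI h2 e).
have dge : forall rho a b, psd rho -> 0 <= Lam rho (q a b) (q a b).
  by move=> rho a b hr; rewrite -BQ_diag; apply: psdQ; apply: Hpsd.
have st0 := is_state_proj (g_e0 C).
have st1 := is_state_proj (g_e1 C).
have stu := is_state_proj (g_uu C).
have stw := is_state_proj (g_ww C).
have Lsum : forall x y, Lam (proj (uu C)) x y + Lam (proj (ww C)) x y
                      = Lam (proj (e0 C)) x y + Lam (proj (e1 C)) x y.
  move=> x y.
  have e : (fun i j => 1 * proj (uu C) i j + proj (ww C) i j) = (fun i j => 1 * proj (e0 C) i j + proj (e1 C) i j).
    apply: functional_extensionality => i; apply: functional_extensionality => j.
    rewrite /proj /uu /ww /e0 /e1.
    case: (I2cases i) => ->; case: (I2cases j) => ->;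
      rewrite ?ketE0 ?ketE1 ?cjN ?aa_conj ?bb_conj ?rmorph0 ?rmorph1.
    - by rewrite mul1r aabb; ring.
    - ring.
    - ring.
    - have -> : 1 * (bb * bb) + - aa * - aa = aa * aa + bb * bb by ring.
      by rewrite aabb; ring.
  have h1 := Hlin 1 (proj (uu C)) (proj (ww C)) x y.
  have h3 := Hlin 1 (proj (e0 C)) (proj (e1 C)) x y.
  rewrite e !mul1r in h1; rewrite !mul1r in h3.
  by rewrite -h1 h3.
set X0 := Lam (proj (e0 C)); set X1 := Lam (proj (e1 C)).
set Xu := Lam (proj (uu C)); set Xw := Lam (proj (ww C)).
pose k0 := (@Ordinal 4 0 isT); pose k1 := (@Ordinal 4 1 isT).
have p0 : 0 <= X0 (q o1 o0) (q o1 o0) by apply: dge; exact: st0.1.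
have p0' : 0 <= X0 (q o1 o1) (q o1 o1) by apply: dge; exact: st0.1.
have a0 := M0 _ k0 st0; rewrite /k0 phi0 !form_e0 ptr0E sum2 in a0.
have b0 := M1 _ k0 st0; rewrite /k0 phi0 !form_e0 ptr1E sum2 in b0.
have t0 := Htp (proj (e0 C)); rewrite trQ !sum2 (proj2 st0) in t0.
have pe0 : proj (e0 C) o0 o0 = 1 by rewrite /proj /e0 ketE0 rmorph1 mulr1.
rewrite pe0 in a0 b0.
have h := erefl (X0 (q o1 o0) (q o1 o0) + X0 (q o1 o1) (q o1 o1)).
rewrite {2}(_ : X0 (q o1 o0) (q o1 o0) + X0 (q o1 o1) (q o1 o1) =
   (X0 (q o0 o0) (q o0 o0) + X0 (q o0 o1) (q o0 o1) + (X0 (q o1 o0) (q o1 o0) + X0 (q o1 o1) (q o1 o1)))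
   - (X0 (q o0 o0) (q o0 o0) + X0 (q o0 o1) (q o0 o1))) in h; last by ring.
rewrite t0 a0 subrr in h.
move/eqP: h; rewrite paddr_eq0 // => /andP [/eqP h10 /eqP h11].
have x001 : X0 (q o0 o1) (q o0 o1) = 0.
  have -> : X0 (q o0 o1) (q o0 o1) = (X0 (q o0 o0) (q o0 o0) + X0 (q o0 o1) (q o0 o1))
     - (X0 (q o0 o0) (q o0 o0) + X0 (q o1 o0) (q o1 o0)) + X0 (q o1 o0) (q o1 o0) by ring.
  by rewrite a0 b0 h10 subrr addr0.
have a1 := M0 _ k0 st1; rewrite /k0 phi0 !form_e0 ptr0E sum2 in a1.
have pe1 : proj (e1 C) o0 o0 = 0 by rewrite /proj /e1 ketE0 rmorph0 mulr0.
rewrite pe1 in a1.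
have q1a : 0 <= X1 (q o0 o0) (q o0 o0) by apply: dge; exact: st1.1.
have q1b : 0 <= X1 (q o0 o1) (q o0 o1) by apply: dge; exact: st1.1.
move/eqP: a1; rewrite paddr_eq0 // => /andP [_ /eqP x101].
have xu01 : Xu (q o0 o1) (q o0 o1) = 0.
  have := Lsum (q o0 o1) (q o0 o1); rewrite /X0 in x001; rewrite x001 x101 addr0.
  have qa : 0 <= Xu (q o0 o1) (q o0 o1) by apply: dge; exact: stu.1.
  have qb : 0 <= Xw (q o0 o1) (q o0 o1) by apply: dge; exact: stw.1.
  by move/eqP; rewrite paddr_eq0 // => /andP [/eqP hh _]; exact: hh.
have psu : psd Xu := Hpsd _ stu.1.
have au := M0 _ k1 stu; rewrite /k1 phi1 (qform_proj (g_uu C)) in au.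
have bu := M1 _ k1 stu; rewrite /k1 phi1 (qform_proj (g_uu C)) in bu.
have tu0 : trace (ptr o0 Xu) = 1 by rewrite trace_ptr0 Htp (proj2 stu).
have tu1 : trace (ptr o1 Xu) = 1 by rewrite trace_ptr1 Htp (proj2 stu).
have fb0 := form_basis (ptr o0 Xu); rewrite au tu0 in fb0.
have fb1 := form_basis (ptr o1 Xu); rewrite bu tu1 in fb1.
have hw0 : qform (ptr o0 Xu) (ww C) (ww C) = 0.
  have -> : qform (ptr o0 Xu) (ww C) (ww C) = (1 + qform (ptr o0 Xu) (ww C) (ww C)) - 1 by ring.
  by rewrite fb0 subrr.
have hw1 : qform (ptr o1 Xu) (ww C) (ww C) = 0.
  have -> : qform (ptr o1 Xu) (ww C) (ww C) = (1 + qform (ptr o1 Xu) (ww C) (ww C)) - 1 by ring.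
  by rewrite fb1 subrr.
rewrite ptr0_form in hw0; rewrite ptr1_form in hw1.
move/eqP: hw0; rewrite paddr_eq0 ?psdQ // => /andP [/eqP hK1 /eqP hK2].
move/eqP: hw1; rewrite paddr_eq0 ?psdQ // => /andP [/eqP hK3 _].
have kK1 := kerQ psu hK1.
have kK2 := kerQ psu hK2.
have kK3 := kerQ psu hK3.
have hK4 : BQ Xu (dl C o0 o1) (dl C o0 o1) = 0 by rewrite BQ_diag.
have kK4 := kerQ psu hK4.
have bbn := bb_neq0 C; have aan := aa_neq0 C.
have kd00 : forall g, BQ Xu (dl C o0 o0) g = 0.
  move=> gg; rewrite (@BQ_ext _ _ _ (fun a b => (1/bb) * ((e0 C) a * (ww C) b) + (aa/bb) * dl C o0 o1 a b)).
    by rewrite BQ_lin kK3 kK4 !mulr0 addr0.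
  move=> a b; rewrite /dl /e0 /ww.
  case: (I2cases a) => ->; case: (I2cases b) => -> /=; rewrite ?ketE0 ?ketE1 /=; by field.
have kd10 : forall g, BQ Xu (dl C o1 o0) g = 0.
  move=> gg; rewrite (@BQ_ext _ _ _ (fun a b => (bb/aa) * dl C o0 o0 a b + (-1/aa) * ((ww C) a * (e0 C) b))).
    by rewrite BQ_lin kd00 kK1 !mulr0 addr0.
  move=> a b; rewrite /dl /e0 /ww.
  case: (I2cases a) => ->; case: (I2cases b) => -> /=; rewrite ?ketE0 ?ketE1 /=; by field.
have kd11 : forall g, BQ Xu (dl C o1 o1) g = 0.
  move=> gg; rewrite (@BQ_ext _ _ _ (fun a b => (bb/aa) * dl C o0 o1 a b + (-1/aa) * ((ww C) a * (e1 C) b))).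
    by rewrite BQ_lin kK4 kK2 !mulr0 addr0.
  move=> a b; rewrite /dl /e1 /ww.
  case: (I2cases a) => ->; case: (I2cases b) => -> /=; rewrite ?ketE0 ?ketE1 /=; by field.
have := Htp (proj (uu C)); rewrite (proj2 stu) trQ !sum2 -!BQ_diag.
rewrite kd00 kd10 kd11 kK4 !addr0 => /eqP; by rewrite eq_sym oner_eq0.
Qed.
End G.


Unset Implicit Arguments.

Theorem mainTheorem8 (C : numClosedFieldType) :
  ~ broadcastable (@is_state C 'I_2) (fun F : 'I_4 -> op C 'I_2 => F = sicE C) /\
  forall n : nat,
    linear_map (@Xi C n) /\
    trace_preserving (@Xi C n) /\
    (forall (idx : 'I_n -> 'I_4) (rho : op C 'I_2), is_state rho ->
       0 <= trace (mulop (tens (fun k : 'I_n => sicE C (idx k))) (@Xi C n rho))) /\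
    (forall (j : 'I_4) (k : 'I_n) (rho : op C 'I_2), is_state rho ->
       trace (mulop (sicE C j) (ptr k (@Xi C n rho))) = trace (mulop (sicE C j) rho)).
Proof.
split; first exact: nobc.
move=> n; split; first exact: Xi_lin.
split; first exact: Xi_tp.
split.
- move=> idx rho hs; exact: Xi_pos.
- move=> j k rho _; exact: Xi_marg.
Qed.
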